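(* Let $f:2^{\mathcal N}\to\mathbb R_{\ge0}$ be non-negative submodular and $\mathcal M=(\mathcal N,\mathcal I)$ a matroid of rank $k$, padded with dummy elements as described in the context. Consider the Smooth Residual Random Greedy algorithm (general matroid) with parameter $T$: $S_0=\emptyset$; for $i=1,\dots,T$, let $M_i$ be a base of $\mathcal M/S_{i-1}$ maximizing $\sum_{u\in M_i}[f(S_{i-1}\cup\{u\})-f(S_{i-1})]$; with probability $1-|S_{i-1}|/k$ let $u_i$ be a uniformly random element of $M_i$ and set $S_i=S_{i-1}\cup\{u_i\}$; otherwise set $S_i=S_{i-1}$. Then for every $i=1,\dots,T$, $$\mathbb E[f(S_i)]-\mathbb E[f(S_{i-1})]\ge\frac1k\,\mathbb E\big[f(O_{S_{i-1}}\cup S_{i-1})-f(S_{i-1})\big].$$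
   Context: A set function $f$ is submodular if $f(A\cup B)+f(A\cap B)\le f(A)+f(B)$ for all $A,B\subseteq\mathcal N$. For $S\in\mathcal I$, the contracted matroid $\mathcal M/S$ has ground set $\mathcal N\setminus S$, with $S'\subseteq\mathcal N\setminus S$ independent iff $S'\cup S\in\mathcal I$. Padding assumption: the ground set contains zero-contribution dummy elements (e.g., a parallel copy $u'$ of every original element $u$, a set being independent iff it contains at most one of $u,u'$ for each $u$ and its projection onto the original elements is independent, and $f$ depending only on the original elements of a set), so that for every $S\in\mathcal I$ one may fix $O_S$ to be a set $A$ maximizing $f(S\cup A)$ over independent sets $A$ of $\mathcal M/S$ which is moreover a base of $\mathcal M/S$ (so $S\cup O_S$ is a base of $\mathcal M$ and $|O_S|=k-|S|$). *)

(* Defs.v *)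
From mathcomp Require Import all_boot all_order all_algebra.
Set Implicit Arguments. Unset Strict Implicit. Unset Printing Implicit Defensive.
Import Order.TTheory GRing.Theory Num.Theory.
Local Open Scope ring_scope.

Definition is_matroid (T : finType) (indep : {set T} -> bool) : Prop :=
  [/\ indep set0,
      (forall A B : {set T}, A \subset B -> indep B -> indep A) &
      (forall A B : {set T}, indep A -> indep B -> (#|A| < #|B|)%N ->
         exists2 x, x \in B :\: A & indep (x |: A))].

Definition matroid_rank (T : finType) (indep : {set T} -> bool) (k : nat) : Prop :=
  (exists2 B : {set T}, indep B & #|B| = k) /\
  (forall A : {set T}, indep A -> (#|A| <= k)%N).

Definition contr_indep (T : finType) (indep : {set T} -> bool) (S A : {set T}) : bool :=
  [disjoint A & S] && indep (A :|: S).

Definition is_base (T : finType) (indep : {set T} -> bool) (B : {set T}) : Prop :=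
  indep B /\ (forall A : {set T}, indep A -> B \subset A -> A = B).

Definition submodular (T : finType) (R : realFieldType) (f : {set T} -> R) : Prop :=
  forall A B : {set T}, f (A :|: B) + f (A :&: B) <= f A + f B.

Definition nonneg_fun (T : finType) (R : realFieldType) (f : {set T} -> R) : Prop :=
  forall A : {set T}, 0 <= f A.

Definition marg (T : finType) (R : realFieldType) (f : {set T} -> R) (S : {set T}) (u : T) : R :=
  f (u |: S) - f S.

(* One step of Smooth Residual Random Greedy from current set S with selected base M
   (of M/S): probability of moving to S'. *)
Definition srrg_step (T : finType) (R : realFieldType) (k : nat)
    (M S S' : {set T}) : R :=
  (#|S|%:R / k%:R) * (S' == S)%:R
  + (1 - #|S|%:R / k%:R) *
      \sum_(u in M) (#|M|%:R)^-1 * (S' == u |: S)%:R.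

(* Distribution of S_i: Msel i S is the base M_{i+1} chosen at iteration i+1 when
   S_i = S. *)
Fixpoint srrg_dist {T : finType} {R : realFieldType} (k : nat)
    (Msel : nat -> {set T} -> {set T}) (i : nat) (S' : {set T}) : R :=
  match i with
  | 0 => (S' == set0)%:R
  | i'.+1 => \sum_(S : {set T}) srrg_dist k Msel i' S * @srrg_step T R k (Msel i' S) S S'
  end.

Definition srrg_E (T : finType) (R : realFieldType) (k : nat)
    (Msel : nat -> {set T} -> {set T}) (i : nat) (g : {set T} -> R) : R :=
  \sum_(S : {set T}) @srrg_dist T R k Msel i S * g S.

(* Main.v *)
Require Import Defs.
From mathcomp Require Import all_boot all_order all_algebra.
From mathcomp Require Import ring lra.
Import Order.TTheory GRing.Theory Num.Theory.
Local Open Scope ring_scope.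

Lemma sum_eq_pick (T : finType) (R : realFieldType) (g : {set T} -> R) X :
  \sum_(S' : {set T}) (S' == X)%:R * g S' = g X.
Proof.
rewrite (bigD1 X) //= eqxx mul1r big1 ?addr0 // => S' /negbTE ->.
by rewrite mul0r.
Qed.

Lemma submod_sum (T : finType) (R : realFieldType) (f : {set T} -> R) :
  submodular f -> forall O S, f (O :|: S) - f S <= \sum_(u in O) marg f S u.
Proof.
move=> sf O S.
have: forall n (O : {set T}), #|O| = n -> f (O :|: S) - f S <= \sum_(u in O) marg f S u;
  last by apply.
elim => [|n IH] {}O hO.
  have -> : O = set0 by apply/cards0_eq.
  by rewrite set0U big_set0 subrr.
have [x xO] : exists x, x \in O by apply/set0Pn; rewrite -card_gt0 hO.
have hO' : #|O :\ x| = n by move: hO; rewrite (cardsD1 x O) xO => -[].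
have := IH _ hO'.
rewrite (big_setD1 x xO) /=.
have xnO' : x \notin O :\ x by rewrite !inE eqxx.
have := sf (x |: S) ((O :\ x) :|: S).
have -> : (x |: S) :|: ((O :\ x) :|: S) = O :|: S.
  apply/setP => y; rewrite !inE.
  case: (eqVneq y x) => [->|] /=; first by rewrite ?eqxx ?xO /= ?orbT.
  by case: (y \in O); case: (y \in S).
have -> : (x |: S) :&: ((O :\ x) :|: S) = S.
  apply/setP => y; rewrite !inE.
  case: (eqVneq y x) => [->|] /=; first by case: (x \in S).
  by case: (y \in O); case: (y \in S).
rewrite /marg => h1 h2; lra.
Qed.

Lemma base_card (T : finType) (indep : {set T} -> bool) k (S M : {set T}) :
  is_matroid indep -> matroid_rank indep k -> indep S ->
  is_base (contr_indep indep S) M -> (#|M| + #|S| = k)%N.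
Proof.
case=> _ sub exch [[B iB cB] rk] iS [cM maxM].
move: cM; rewrite /contr_indep => /andP[dMS iMS].
have cU : #|M :|: S| = (#|M| + #|S|)%N.
  by rewrite cardsU (disjoint_setI0 dMS) cards0 subn0.
rewrite -cU; apply/eqP; rewrite eqn_leq rk //=.
rewrite leqNgt; apply/negP => lt.
have ltB : (#|M :|: S| < #|B|)%N by rewrite cB.
have [x /setDP[xB xC] ix] := exch _ _ iMS iB ltB.
have eq : x |: M = M.
  apply: maxM; last by apply: subsetUr.
  rewrite /contr_indep -setUA ix andbT.
  rewrite -setI_eq0; apply/eqP/setP => y; rewrite !inE.
  move: dMS; rewrite -setI_eq0 => /eqP/setP/(_ y); rewrite !inE => h.
  case: (eqVneq y x) => [->|] /=; last by rewrite h.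
  by move: xC; rewrite !inE negb_or => /andP[_ /negbTE ->].
by move: xC; rewrite -eq !inE eqxx.
Qed.

Lemma step_sum (T : finType) (R : realFieldType) (f : {set T} -> R) k (M S : {set T}) :
  (0 < k)%N -> (#|M| + #|S| = k)%N ->
  \sum_(S' : {set T}) @srrg_step T R k M S S' * f S' =
  f S + k%:R^-1 * \sum_(u in M) marg f S u.
Proof.
move=> kpos hk.
rewrite /srrg_step.
rewrite (eq_bigr (fun S' => #|S|%:R/k%:R * ((S'==S)%:R * f S') +
   (1 - #|S|%:R/k%:R) * \sum_(u in M) (#|M|%:R^-1 * ((S' == u |: S)%:R * f S'))));
  last first.
  move=> S' _; rewrite mulrDl; congr (_ + _); first by rewrite !mulrA.
  rewrite -mulrA big_distrl /=; congr (_ * _); apply: eq_bigr => u _.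
  by rewrite mulrA.
rewrite big_split /= -!big_distrr /= sum_eq_pick exchange_big /=.
rewrite (eq_bigr (fun u => #|M|%:R^-1 * f (u |: S))); last first.
  by move=> u _; rewrite -big_distrr /= sum_eq_pick.
rewrite -big_distrr /= /marg sumrB sumr_const -mulr_natr.
case: (posnP #|M|) => [m0|mpos].
  have M0 : M = set0 by apply/cards0_eq.
  move: hk; rewrite m0 add0n => hk.
  rewrite M0 big_set0 ?cards0 hk.
  have k0 : (k%:R : R) != 0 by rewrite pnatr_eq0 -lt0n.
  rewrite mulr0n !mulr0 subrr ?mulr0 ?addr0 ?mul1r.
  by rewrite divff // mul1r.
rewrite -hk natrD.
have m0 : (#|M|%:R : R) != 0 by rewrite pnatr_eq0 -lt0n.
have k0 : (#|M|%:R + #|S|%:R : R) != 0.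
  by rewrite -natrD pnatr_eq0 -lt0n hk.
field.
by rewrite k0 m0.
Qed.

Lemma dist_ok (T : finType) (R : realFieldType) (indep : {set T} -> bool) k
    (Msel : nat -> {set T} -> {set T}) :
  is_matroid indep -> matroid_rank indep k -> (0 < k)%N ->
  (forall i S, indep S -> is_base (contr_indep indep S) (Msel i S)) ->
  forall i S, 0 <= @srrg_dist T R k Msel i S /\
              (@srrg_dist T R k Msel i S != 0 -> indep S).
Proof.
move=> mat rk kpos HM.
have [i0 sub _] := mat.
elim => [|i IH] S /=.
  split; first exact: ler0n.
  move=> h; have /eqP -> : S == set0 by apply: contraNT h => /negbTE ->.
  exact: i0.
split.
  apply: sumr_ge0 => S0 _.
  have [d0 di] := IH S0.
  case: (eqVneq (@srrg_dist T R k Msel i S0) 0) => [->|nz]; first by rewrite mul0r.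
  have iS0 := di nz.
  apply: mulr_ge0 => //.
  rewrite /srrg_step; apply: addr_ge0; apply: mulr_ge0.
  - by apply: divr_ge0; apply: ler0n.
  - by apply: ler0n.
  - rewrite subr_ge0 ler_pdivrMr ?ltr0n // mul1r ler_nat.
    exact: (rk.2 _ iS0).
  - apply: sumr_ge0 => u _; apply: mulr_ge0; last by apply: ler0n.
    by rewrite invr_ge0 ler0n.
move=> nz.
case: (boolP (indep S)) => // nind.
exfalso; move/negP: nz; apply; apply/eqP; apply: big1 => S0 _.
case: (eqVneq (@srrg_dist T R k Msel i S0) 0) => [->|nzS0]; first by rewrite mul0r.
have iS0 := (IH S0).2 nzS0.
have [cM _] := HM i S0 iS0.
have ne : S != S0 by apply: contraNneq nind => ->.
rewrite /srrg_step (negbTE ne) mulr0 add0r big1 ?mulr0 // => u uM.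
case: eqP => [eq|]; last by rewrite mulr0.
exfalso; move/negP: nind; apply; rewrite eq.
move: cM; rewrite /contr_indep => /andP[_ iMS].
apply: (sub _ _ _ iMS).
apply/subsetP => y; rewrite !inE => /orP[/eqP->|->]; last by rewrite orbT.
by rewrite uM.
Qed.

Theorem lemma12 (T : finType) (R : realFieldType) (f : {set T} -> R)
    (indep : {set T} -> bool) (k : nat) (O : {set T} -> {set T})
    (Msel : nat -> {set T} -> {set T}) (Tn : nat) :
  nonneg_fun f -> submodular f ->
  is_matroid indep -> matroid_rank indep k -> (0 < k)%N ->
  (* O_S: an optimal independent set of M/S which is a base of M/S *)
  (forall S, indep S ->
     is_base (contr_indep indep S) (O S) /\
     (forall A, contr_indep indep S A -> f (S :|: A) <= f (S :|: O S))) ->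
  (* M_{i+1}: a base of M/S_i maximizing the sum of marginal gains *)
  (forall i S, indep S ->
     is_base (contr_indep indep S) (Msel i S) /\
     (forall B, is_base (contr_indep indep S) B ->
        \sum_(u in B) marg f S u <= \sum_(u in Msel i S) marg f S u)) ->
  forall i : nat, (1 <= i <= Tn)%N ->
    srrg_E k Msel i f - srrg_E k Msel i.-1 f >=
    k%:R^-1 * srrg_E k Msel i.-1 (fun S => f (O S :|: S) - f S).
Proof.
move=> _ sf mat rk kpos HO HM i /andP[i1 _].
case: i i1 => // j _ /=.
rewrite /srrg_E /=.
have E : \sum_(S' : {set T}) (\sum_(S : {set T}) @srrg_dist T R k Msel j S *
             @srrg_step T R k (Msel j S) S S') * f S' =
         \sum_(S : {set T}) @srrg_dist T R k Msel j S *
           \sum_(S' : {set T}) @srrg_step T R k (Msel j S) S S' * f S'.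
  rewrite (eq_bigr (fun S' : {set T} => \sum_(S : {set T}) @srrg_dist T R k Msel j S *
                   (@srrg_step T R k (Msel j S) S S' * f S'))); last first.
    by move=> S' _; rewrite big_distrl; apply: eq_bigr => S _; rewrite mulrA.
  rewrite exchange_big /=; apply: eq_bigr => S _; by rewrite big_distrr.
rewrite E -sumrB big_distrr /=.
apply: ler_sum => S _.
rewrite -mulrBr mulrCA.
have HM' : forall i S, indep S -> is_base (contr_indep indep S) (Msel i S).
  by move=> i' S' iS'; have [] := HM i' S' iS'.
have [d0 di] := @dist_ok T R _ _ _ mat rk kpos HM' j S.
case: (eqVneq (@srrg_dist T R k Msel j S) 0) => [->|nz]; first by rewrite !mul0r.
have iS := di nz.
apply: ler_wpM2l => //.
have hk := @base_card T _ _ _ _ mat rk iS (HM' j S iS).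
rewrite step_sum //.
rewrite addrAC subrr add0r.
apply: ler_wpM2l; first by rewrite invr_ge0 ler0n.
apply: le_trans; first exact: (@submod_sum T R f sf (O S) S).
exact: (HM j S iS).2 _ (HO S iS).1.
Qed.
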